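(* Let $S$ be a finite set with $|S|\ge2$ and fix $C>1$. Define $\omega_S:F(S)\to[1,\infty)$ by $\omega_S(e)=C^{\gamma_S(e)}$ if $e\neq\theta_S$ and $\omega_S(\theta_S)=C$. Then $\omega_S$ is a submultiplicative weight on $F(S)$. Moreover, defining $\psi:F(S)\to\{0,1\}$ by $\psi(e)=1$ for $e\ne\theta_S$ and $\psi(\theta_S)=0$: (i) $\sup_{e,f\in F(S)}\dfrac{|\psi(e)\psi(f)-\psi(ef)|}{\omega_S(e)\omega_S(f)}\le C^{-|S|}$; (ii) for every multiplicative function $\phi:F(S)\to\{0,1\}$, $\sup_{e\in F(S)}\omega_S(e)^{-1}|\psi(e)-\phi(e)|\ge C^{-1}$.
   Context: $F(S)$ is the free semilattice on $S$: the set of non-empty subsets of $S$ with product given by union. $\gamma_S(e)$ is the cardinality of $e\in F(S)$ (the minimal number of generators needed to produce $e$), and $\theta_S=S$ is the least (zero) element of $F(S)$. A weight $\omega$ is submultiplicative if $\omega(xy)\le\omega(x)\omega(y)$. *)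

(* Defs.v *)
From HB Require Import structures.
From mathcomp Require Import all_boot all_order all_algebra.
Set Implicit Arguments. Unset Strict Implicit. Unset Printing Implicit Defensive.
Import Order.TTheory GRing.Theory Num.Theory.
Local Open Scope ring_scope.

(* The free semilattice F(S): non-empty subsets of S, product = union.
   We represent elements as sets e : {set S} with (e != set0); the product
   of e and f is e :|: f. *)
Definition inF (S : finType) (e : {set S}) : bool := e != set0.

Definition gammaS (S : finType) (e : {set S}) : nat := #|e|.
Definition thetaS (S : finType) : {set S} := [set: S].

Definition omegaS (R : realFieldType) (S : finType) (C : R) (e : {set S}) : R :=
  if e == thetaS S then C else C ^+ gammaS e.

Definition psiS (R : realFieldType) (S : finType) (e : {set S}) : R :=
  if e == thetaS S then 0 else 1.

(* Main.v *)
Require Import Defs.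
From HB Require Import structures.
From mathcomp Require Import all_boot all_order all_algebra.
Import Order.TTheory GRing.Theory Num.Theory.
Local Open Scope ring_scope.
Lemma phi_all (S : finType) (phi : {set S} -> bool) :
  (forall e f : {set S}, inF e -> inF f -> phi (e :|: f) = phi e && phi f) ->
  (forall s, phi [set s]) -> forall A : {set S}, A != set0 -> phi A.
Proof.
move=> hm h1 A; move: {2}#|A| (leqnn #|A|) => n; elim: n A => [|n IH] A.
  by rewrite leqn0 cards_eq0 => ->.
move=> hA /set0Pn [x xA].
case: (boolP (A :\ x == set0)) => [/eqP e|ne].
  have -> : A = [set x].
    apply/setP => y; rewrite in_set1; case: (eqVneq y x) => [->//|yx].
    apply: negbTE; apply/negP => yA.
    have : y \in A :\ x by rewrite in_setD1 yx yA.
    by rewrite e in_set0.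
  by [].
have -> : A = [set x] :|: A :\ x by rewrite setD1K.
rewrite hm ?h1 //=; last by apply/set0Pn; exists x; rewrite in_set1.
apply: IH => //; rewrite -ltnS; apply: leq_trans hA.
by rewrite (cardsD1 x A) xA.
Qed.

Lemma omega_geC (R : realFieldType) (S : finType) (C : R) (hC : 1 < C) (e : {set S}) :
  inF e -> C <= omegaS C e.
Proof.
rewrite /inF /omegaS /gammaS => ne; case: ifP => // _.
rewrite -{1}(expr1 C) ler_eXn2l // lt0n cards_eq0 //.
Qed.

Arguments omega_geC {R S C} hC {e}.

Theorem propositionp (R : realFieldType) (S : finType) (C : R)
  (hS : (1 < #|S|)%N) (hC : 1 < C) :
  ((forall e : {set S}, inF e -> 1 <= omegaS C e) /\
   (forall e f : {set S}, inF e -> inF f ->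
      omegaS C (e :|: f) <= omegaS C e * omegaS C f)) /\
  (forall e f : {set S}, inF e -> inF f ->
     `|psiS R e * psiS R f - psiS R (e :|: f)| / (omegaS C e * omegaS C f)
       <= C ^- #|S|) /\
  (forall phi : {set S} -> bool,
     (forall e f : {set S}, inF e -> inF f -> phi (e :|: f) = phi e && phi f) ->
     exists2 e : {set S}, inF e &
       C^-1 <= (omegaS C e)^-1 * `|psiS R e - (phi e)%:R|).
Proof.
have C0 : 0 < C by apply: lt_trans hC.
have C1 : 1 <= C by apply: ltW.
have Cn : forall n, 0 < C ^+ n by move=> n; apply: exprn_gt0.
have om0 : forall e : {set S}, 0 < omegaS C e.
  by move=> e; rewrite /omegaS; case: ifP.
split; [split|split].
- by move=> e he; exact: le_trans C1 (omega_geC hC he).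
- move=> e f he hf; rewrite {1}/omegaS; case: ifP => [_|].
    apply: le_trans (omega_geC hC he) _.
    rewrite -{1}(mulr1 (omegaS C e)) ler_wpM2l ?(ltW (om0 e)) //.
    by apply: le_trans (omega_geC hC hf).
  move=> hU; have ne : e != thetaS S.
    by apply/negP => /eqP E; move: hU; rewrite E /thetaS setTU eqxx.
  have nf : f != thetaS S.
    by apply/negP => /eqP E; move: hU; rewrite E /thetaS setUT eqxx.
  rewrite /omegaS (negbTE ne) (negbTE nf) -exprD ler_eXn2l //.
  exact: leq_card_setU.
- move=> e f he hf; rewrite /psiS.
  case: (eqVneq (e :|: f) (thetaS S)) => hU; last first.
    have ne : e != thetaS S.
      by apply/negP => /eqP E; move: hU; rewrite E /thetaS setTU eqxx.
    have nf : f != thetaS S.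
      by apply/negP => /eqP E; move: hU; rewrite E /thetaS setUT eqxx.
    by rewrite (negbTE ne) (negbTE nf) mulr1 subrr normr0 mul0r invr_ge0 ltW.
  case: (eqVneq e (thetaS S)) => ne.
    by rewrite mul0r subrr normr0 mul0r invr_ge0 ltW.
  case: (eqVneq f (thetaS S)) => nf.
    by rewrite mulr0 subrr normr0 mul0r invr_ge0 ltW.
  rewrite mulr1 subr0 normr1 mul1r /omegaS (negbTE ne) (negbTE nf) -exprD.
  rewrite lef_pV2 ?posrE // ler_eXn2l // -(cardsT S) -/(thetaS S) -hU.
  exact: leq_card_setU.
- move=> phi hm.
  have T0 : inF (thetaS S).
    by rewrite /inF /thetaS -cards_eq0 cardsT -lt0n (ltn_trans _ hS).
  case hT : (phi (thetaS S)).
    exists (thetaS S) => //.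
    rewrite /omegaS /psiS eqxx sub0r normrN.
    by rewrite hT normr1 mulr1.
  have [s hs] : exists s, ~~ phi [set s].
    apply/existsP; rewrite -negb_forall; apply/negP => /forallP H.
    by move: hT; rewrite (@phi_all _ _ hm H _ T0).
  have ns : [set s] != thetaS S.
    apply/negP => /eqP E; move: hS; by rewrite -cardsT -/(thetaS S) -E cards1.
  exists [set s]; first by apply/set0Pn; exists s; rewrite in_set1.
  by rewrite /omegaS /psiS (negbTE ns) (negbTE hs) /gammaS cards1 expr1 subr0 normr1 mulr1.
Qed.
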